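(* Suppose the true density is $g=f_\theta$ for some $\theta\in\Theta$, and the kernel satisfies $$u^{\alpha*}_\theta(y)=M f_\theta^\alpha(y)u_\theta(y)+L\quad\text{for all }y,$$ for a vector $L\in\mathbb{R}^p$ depending only on $\alpha$ and $h$ and a nonsingular $p\times p$ matrix $M$ depending on $\theta,\alpha,h$, such that for each $j=1,\dots,p$ either $\int u_{\theta_j}f_\theta^{1+\alpha}=0$ or the $j$-th column of $M$ does not depend on $\theta$. Then the influence function of the minimum $S^*$-divergence functional $T^*_{(\alpha,\lambda)}$ at $G=F_\theta$ equals that of the minimum $S$-divergence functional at $F_\theta$, namely $$IF(y;F_\theta,T^*_{(\alpha,\lambda)})=\left(\int u_\theta u_\theta^Tf_\theta^{1+\alpha}\right)^{-1}\left[u_\theta(y)f_\theta^\alpha(y)-\int u_\theta f_\theta^{1+\alpha}\right].$$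
   Context: $\{F_\theta:\theta\in\Theta\subseteq\mathbb{R}^p\}$ is a parametric family on $\mathbb{R}$ with Lebesgue densities $f_\theta$, $u_\theta=\nabla_\theta\log f_\theta$ with components $u_{\theta_j}$. Fix $\alpha\ge0$, $\lambda\in\mathbb{R}$, $A=1+\lambda(1-\alpha)$, $B=\alpha-\lambda(1-\alpha)$, and $S_{(\alpha,\lambda)}(g,f)=\frac1A\int f^{1+\alpha}-\frac{1+\alpha}{AB}\int f^Bg^A+\frac1B\int g^{1+\alpha}$ (continuous limits when $A=0$ or $B=0$). $W(x,y,h)\ge0$ is a kernel with fixed bandwidth $h>0$, a probability density in $x$ for each $y$; $f^*_\theta(x)=\int W(x,y,h)f_\theta(y)dy$, $g^*(x)=\int W(x,y,h)dG(y)$, $\tilde u_\theta=\nabla_\theta\log f^*_\theta$, $u^{\alpha*}_\theta(y)=\int\tilde u_\theta(x)\{f^*_\theta(x)\}^\alpha W(x,y,h)dx$. The minimum $S^*$-divergence functional $T^*_{(\alpha,\lambda)}(G)$ minimizes $\theta\mapsto S_{(\alpha,\lambda)}(g^*,f^*_\theta)$ (solving $\int K(g^*/f^*_\theta-1)(f^*_\theta)^{1+\alpha}\tilde u_\theta=0$, $K(\delta)=((\delta+1)^A-1)/A$, or $\log(1+\delta)$ if $A=0$). The influence function is $IF(y;G,T)=\frac{\partial}{\partial\epsilon}T((1-\epsilon)G+\epsilon\wedge_y)|_{\epsilon=0}$, $\wedge_y$ the point mass at $y$. *)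

(* Defs.v *)
From HB Require Import structures.
From mathcomp Require Import all_boot all_order all_algebra.
From mathcomp Require Import all_classical all_reals all_analysis.
Import Order.TTheory GRing.Theory Num.Theory.
Import numFieldNormedType.Exports.
Local Open Scope classical_set_scope.
Local Open Scope ring_scope.

Set Implicit Arguments.
Unset Strict Implicit.
Unset Printing Implicit Defensive.

Definition RintL (R : realType) (F : R -> R) : R :=
  Rintegral (@lebesgue_measure R) setT F.

Definition Lintegrable (R : realType) (F : R -> R) : Prop :=
  (@lebesgue_measure R).-integrable setT (fun x => (F x)%:E).

Definition L2integrable (R : realType) (F : R * R -> R) : Prop :=
  ((@lebesgue_measure R) \x (@lebesgue_measure R))%E.-integrable setT
    (fun z => (F z)%:E).

Definition vint (R : realType) (p : nat) (F : R -> 'cV[R]_p) : 'cV[R]_p :=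
  \col_i RintL (fun x => F x i 0).

Definition mint (R : realType) (p : nat) (F : R -> 'M[R]_p) : 'M[R]_p :=
  \matrix_(i, j) RintL (fun x => F x i j).

Definition ej (R : realType) (p : nat) (j : 'I_p) : 'cV[R]_p := delta_mx j 0.

Definition pdiff (R : realType) (p : nat) (F : 'cV[R]_p -> R) (j : 'I_p)
  (th : 'cV[R]_p) : R := 'D_(ej R j) F th.

Definition grad (R : realType) (p : nat) (F : 'cV[R]_p -> R) (th : 'cV[R]_p)
  : 'cV[R]_p := \col_(j < p) pdiff F j th.

Definition score (R : realType) (p : nat) (f : 'cV[R]_p -> R -> R)
  (th : 'cV[R]_p) (x : R) : 'cV[R]_p :=
  grad (fun th' => ln (f th' x)) th.

Definition fstar (R : realType) (p : nat) (W : R -> R -> R -> R) (h : R)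
  (f : 'cV[R]_p -> R -> R) (th : 'cV[R]_p) (x : R) : R :=
  RintL (fun y => W x y h * f th y).

Definition utilde (R : realType) (p : nat) (W : R -> R -> R -> R) (h : R)
  (f : 'cV[R]_p -> R -> R) (th : 'cV[R]_p) (x : R) : 'cV[R]_p :=
  grad (fun th' => ln (fstar W h f th' x)) th.

Definition ualphastar (R : realType) (p : nat) (alpha : R)
  (W : R -> R -> R -> R) (h : R) (f : 'cV[R]_p -> R -> R)
  (th : 'cV[R]_p) (y : R) : 'cV[R]_p :=
  vint (fun x => (fstar W h f th x `^ alpha * W x y h) *: utilde W h f th x).

Definition Acoef (R : realType) (alpha lambda : R) : R :=
  1 + lambda * (1 - alpha).

Definition Kfun (R : realType) (A delta : R) : R :=
  if A == 0 then ln (1 + delta) else ((delta + 1) `^ A - 1) / A.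

(* integrand of the estimating equation of the minimum S*-divergence
   functional, for a smoothed data density gs = g* :
   x |-> K(g*(x)/f*_theta(x) - 1) f*_theta(x)^(1+alpha) u~_theta(x) *)
Definition Psi_integrand (R : realType) (p : nat) (alpha lambda : R)
  (W : R -> R -> R -> R) (h : R) (f : 'cV[R]_p -> R -> R)
  (gs : R -> R) (th : 'cV[R]_p) (x : R) : 'cV[R]_p :=
  (Kfun (Acoef alpha lambda) (gs x / fstar W h f th x - 1)
     * fstar W h f th x `^ (1 + alpha)) *: utilde W h f th x.

Definition Psi (R : realType) (p : nat) (alpha lambda : R)
  (W : R -> R -> R -> R) (h : R) (f : 'cV[R]_p -> R -> R)
  (gs : R -> R) (th : 'cV[R]_p) : 'cV[R]_p :=
  vint (Psi_integrand alpha lambda W h f gs th).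

(* smoothed density g*_eps of the contaminated distribution
   G_eps = (1-eps) F_theta + eps /\_y :
   g*_eps(x) = int W(x,z,h) dG_eps(z) = (1-eps) f*_theta(x) + eps W(x,y,h) *)
Definition gstar_contam (R : realType) (p : nat) (W : R -> R -> R -> R) (h : R)
  (f : 'cV[R]_p -> R -> R) (th : 'cV[R]_p) (y eps : R) (x : R) : R :=
  (1 - eps) * fstar W h f th x + eps * W x y h.

(* influence function of a functional T along the contamination path,
   given t(eps) = T((1-eps)G + eps /\_y), eps in [0,1]:
   the (right) derivative of t at eps = 0 *)
Definition IF_path (R : realType) (p : nat) (t : R -> 'cV[R]_p) : 'cV[R]_p :=
  lim ((fun e : R => e^-1 *: (t e - t 0)) @ 0^'+).

(* Main.v *)
Require Import Defs.
From HB Require Import structures.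
From mathcomp Require Import all_boot all_order all_algebra.
From mathcomp Require Import all_classical all_reals all_analysis.
From mathcomp Require Import measurable_realfun ring lra.
Import Order.TTheory GRing.Theory Num.Theory.
Import numFieldNormedType.Exports.
Local Open Scope classical_set_scope.
Local Open Scope ring_scope.


Lemma ift_core (R : realType) (V W : normedModType R) (Phi : R * V -> W)
  (t : R -> V) (th : V) :
  differentiable Phi (0, th) ->
  (forall e, 0 < e <= 1 -> Phi (e, t e) = 0) -> Phi (0, th) = 0 -> t 0 = th ->
  cvg ((fun e : R => e^-1 *: (t e - t 0)) @ 0^'+) ->
  'd Phi (0, th) (1, lim ((fun e : R => e^-1 *: (t e - t 0)) @ 0^'+)) = 0.
Proof.
move=> dPhi Pt P0 t0 cq.
set q := (fun e : R => _).
set l := lim (q @ 0^'+).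
have ql : q @ 0^'+ --> l by exact: cq.
set D := 'd Phi (0, th).
have Dc : continuous D by exact: diff_continuous.
have ho := diff_locally dPhi.
move/eqaddoP: ho => ho.
have pc : (fun e => ((1:R), q e)) @ 0^'+ --> ((1:R), l).
  exact: (cvg_pair (cvg_cst (1:R)) ql).
have Dq : (fun e => D (1, q e)) @ 0^'+ --> D (1, l).
  by apply: continuous_cvg => //; exact: Dc.
have h1 : (fun e : R => e) @ 0^'+ --> (0:R) by exact: cvg_at_right_filter.
have h2 : (fun e => t e - th) @ 0^'+ --> (0:V).
  have -> : (0:V) = 0 *: l by rewrite scale0r.
  apply: (@cvg_trans _ ((fun e => e *: q e) @ 0^'+)).
    apply: (@near_eq_cvg _ _ (0:R)^'+ _ (fun e => e *: q e)); near=> e.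
    have e0 : 0 < e by near: e; exact: nbhs_right_gt.
    by rewrite /q scalerA mulfV ?gt_eqF // scale1r t0.
  exact: (cvgZ h1 ql).
have hc : (fun e => (e, t e - th)) @ 0^'+ --> (0:R*V) := cvg_pair h1 h2.
apply/eqP; rewrite -normr_le0; apply/ler_addgt0Pr => eps eps0; rewrite add0r.
set C := `|((1:R), l)| + 1.
have C0 : 0 < C by rewrite /C ltr_pwDr.
have epsC : 0 < eps / (2 * C) by rewrite divr_gt0 // mulr_gt0.
have hoe := ho _ epsC.
have : \forall e \near (0:R)^'+, `|D (1, l)| <= eps.
  near=> e.
  have e0 : 0 < e by near: e; exact: nbhs_right_gt.
  have e1 : e <= 1 by near: e; exact: nbhs_right_le.
  have H1 : `|D (1, l) - D (1, q e)| < eps / 2.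
    by near: e; move/cvgrPdist_lt: Dq; apply; rewrite divr_gt0.
  have H2 : `|((1:R), l) - (1, q e)| < 1.
    by near: e; move/cvgrPdist_lt: pc; apply; exact: ltr01.
  have H3 : `|((Phi \o shift (0, th)) - (cst (Phi (0, th)) + D)) (e, t e - th)|
      <= eps / (2 * C) * `|(e, t e - th)|.
    by near: e; exact: hc _ hoe.
  have hq : t e - th = e *: q e by rewrite /q scalerA mulfV ?gt_eqF // scale1r t0.
  have hp : ((e, t e - th) : R * V) = e *: ((1:R), q e).
    by rewrite hq /GRing.scale /= /scale_pair /= [e%:A]mulr1.
  have Ephi : Phi ((e, t e - th) + (0, th)) = 0.
    have -> : ((e, t e - th) + (0, th)) = (e, t e).
      have -> : (e, t e - th) + (0, th) = (e + 0, (t e - th) + th) by []. by rewrite addr0 subrK.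
    by apply: Pt; rewrite e0 e1.
  move: H3; rewrite !fctE /= Ephi P0 !add0r normrN hp linearZ normrZ.
  rewrite normrZ gtr0_norm // => H3.
  have Hb : `|((1:R), q e)| <= C.
    have -> : ((1:R), q e) = (1, l) - ((1, l) - (1, q e)) by rewrite opprB addrC subrK.
    by rewrite (le_trans (ler_normB _ _)) // /C lerD2l ltW.
  have HD : `|D (1, q e)| <= eps / 2.
    have : e * `|D (1, q e)| <= e * (eps / 2).
      apply: (le_trans H3); rewrite mulrCA ler_pM2l //.
      rewrite (@le_trans _ _ (eps / (2 * C) * C)) //.
        by rewrite ler_pM2l.
      by rewrite invfM mulrA -mulrA mulVf ?gt_eqF // mulr1.
    by rewrite ler_pM2l.
  rewrite -(subrK (D (1, q e)) (D (1, l))).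
  apply: (le_trans (ler_normD _ _)).
  by rewrite [X in _ <= X](splitr eps) lerD // ltW.
by move=> /filter_ex [].
Unshelve. all: end_near.
Qed.


Section OneVar.
Context {R : realType}.

Lemma derive_line (V W : normedModType R) (F : V -> W) (a v : V) :
  'D_v F a = 'D_1 (fun h : R => F (h *: v + a)) 0.
Proof.
rewrite /derive /= scale0r add0r.
suff -> : (fun h : R => h^-1 *: (F (h *: v + a) - F a)) = (fun h : R => h^-1 *: (F ((h *: (1:R^o) + 0) *: v + a) - F a)) by [].
by apply/funext => h; rewrite addr0 (_ : h *: (1:R^o) = h) //; exact: mulr1.
Qed.

Lemma derivable_line (V W : normedModType R) (F : V -> W) (a v : V) :
  derivable F a v -> derivable (fun h : R => F (h *: v + a)) 0 1.
Proof. by move/derivable1P. Qed.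

Lemma derive_Zvanish (W : normedModType R) (a : R -> R) (c : R -> W) (a' : R) :
  a 0 = 0 -> is_derive (0:R) (1:R) a a' -> {for 0, continuous c} ->
  'D_(1:R) (fun h : R => a h *: c h) 0 = a' *: c 0.
Proof.
move=> a0 [da <-] cc.
rewrite /derive /=.
rewrite a0 scale0r.
under eq_fun => h do rewrite subr0 scalerA.
under [in RHS]eq_fun => h do rewrite subr0.
move: da; rewrite /derivable /= a0.
under eq_fun => h do rewrite subr0.
move=> da.
apply: cvg_lim => //.
apply: cvgZ; first exact: da.
have E : forall x : R, x%:A + 0 = x by move=> x; rewrite addr0 [x%:A]mulr1.
under eq_fun => x do rewrite E.
exact: cvg_within_filter.
Qed.


Lemma pdiff_ln (p : nat) (F : 'cV[R]_p -> R) (j : 'I_p) (a : 'cV[R]_p) :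
  differentiable F a -> 0 < F a ->
  pdiff (fun th => ln (F th)) j a = pdiff F j a / F a.
Proof.
move=> dF Fa; rewrite /pdiff !(derive_line _ _ _ a (ej R j)).
set g := fun h : R => F (h *: ej R j + a).
have dg : derivable g 0 1 by apply: derivable_line; exact: diff_derivable.
have g0 : g 0 = F a by rewrite /g scale0r add0r.
have Hln : is_derive (g 0) (1:R) (@ln R) (g 0)^-1 by apply: is_derive1_ln; rewrite g0.
have H := is_derive1_comp Hln (derivableP dg).
have -> : (fun h : R => ln (F (h *: ej R j + a))) = (@ln R) \o g by [].
by rewrite (@derive_val _ _ _ _ _ _ _ H) g0 mulrC.
Qed.

Lemma Kfun_derive (A : R) : is_derive (0:R) (1:R) (Kfun A) 1.
Proof.
have H1 : is_derive (0:R) (1:R) (shift (1:R)) 1 := is_derive_shift _ _ _.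
have [A0|A0] := eqVneq A 0.
  have -> : Kfun A = (@ln R) \o (shift 1).
    by apply/funext => d; rewrite /Kfun A0 eqxx /= addrC.
  have H2 : is_derive (shift (1:R) 0) (1:R) (@ln R) ((0 + 1)^-1).
    by apply: is_derive1_ln; rewrite /= add0r.
  apply: (is_derive_eq (is_derive1_comp H2 H1)).
  by change ((0 + 1 : R)^-1 * 1 = 1); rewrite add0r invr1 mulr1.
have -> : Kfun A = A^-1 \*: ((@powR R) ^~ A \o (shift 1) - cst 1).
  apply/funext => d; rewrite /Kfun (negbTE A0) /= mulrC.
  by [].
have H2 : is_derive (shift (1:R) 0) (1:R) ((@powR R) ^~ A) (A * (0 + 1) `^ (A - 1)).
  by apply: is_derive1_powR; rewrite /= add0r.
have H3 := is_derive1_comp H2 H1.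
have H4 := is_deriveB H3 (is_derive_cst (1:R) (0:R) (1:R)).
have H5 := is_deriveZ (A^-1) H4.
apply: (is_derive_eq H5).
change (A^-1 *: (A * (0 + 1 : R) `^ (A - 1) * 1 - 0) = 1).
by rewrite add0r powR1 mulr1 subr0 /GRing.scale /= mulr1 mulVf.
Qed.

Lemma Kfun0 (A : R) : Kfun A 0 = 0.
Proof.
by rewrite /Kfun; case: eqP => _; rewrite ?addr0 ?ln1 // add0r powR1 subrr mul0r.
Qed.


Lemma dPsi_eps (W : normedModType R) (A fs w P : R) (U : W) : 0 < fs ->
  'D_(1:R) (fun e : R => (Kfun A (((1 - e) * fs + e * w) / fs - 1) * P) *: U) 0
  = ((w / fs - 1) * P) *: U.
Proof.
move=> fs0.
apply: (@derive_Zvanish _ (fun e => Kfun A (((1 - e) * fs + e * w) / fs - 1) * P) (fun _ => U)).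
- by rewrite subr0 mul1r mul0r addr0 mulfV ?gt_eqF // subrr Kfun0 mul0r.
- set cc := w / fs - 1.
  have -> : (fun e : R => Kfun A (((1 - e) * fs + e * w) / fs - 1) * P)
          = P \*: (Kfun A \o (cc \*: id)).
    apply/funext => e /=; rewrite mulrC; congr (_ * Kfun A _).
    rewrite /cc /GRing.scale /=.
    field; exact: lt0r_neq0.
  have H0 : is_derive (0:R) (1:R) (cc \*: id) (cc *: 1) := is_deriveZ cc (is_derive_id _ _).
  have HK : is_derive ((cc \*: id) 0) (1:R) (Kfun A) 1.
    by rewrite /= /GRing.scale /= mulr0; exact: Kfun_derive.
  apply: (is_derive_eq (is_deriveZ P (is_derive1_comp HK H0))).
  by rewrite /GRing.scale /= mul1r mulr1 mulrC.
- exact: cst_continuous.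
Qed.

Lemma line_cont (V : normedModType R) (v a : V) :
  {for 0, continuous (fun h : R => h *: v + a)}.
Proof.
apply: cvgD; last exact: cvg_cst.
exact: (cvgZl (cvg_id)).
Qed.

Lemma dPsi_theta (p : nat) (W : normedModType R) (G : 'cV[R]_p -> R)
  (Ut : 'cV[R]_p -> W) (A al g0 : R) (v a : 'cV[R]_p) :
  differentiable G a -> 0 < G a -> g0 = G a -> {for a, continuous Ut} ->
  'D_v (fun th => (Kfun A (g0 / G th - 1) * G th `^ (1 + al)) *: Ut th) a
   = ((- ('D_v G a / G a)) * G a `^ (1 + al)) *: Ut a.
Proof.
move=> dG Ga0 g0E cU.
rewrite !(derive_line _ _ _ a v).
set g := fun h : R => G (h *: v + a).
have g0a : g 0 = G a by rewrite /g scale0r add0r.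
have dg : derivable g 0 1 by apply: derivable_line; exact: diff_derivable.
have gc : {for 0, continuous g}.
  by apply: differentiable_continuous; apply/derivable1_diffP.
have -> : (fun h : R => (Kfun A (g0 / G (h *: v + a) - 1) * G (h *: v + a) `^ (1 + al))
      *: Ut (h *: v + a))
   = (fun h => Kfun A (g0 / g h - 1) *: (g h `^ (1 + al) *: Ut (h *: v + a))).
  by apply/funext => h; rewrite scalerA.
have Ha0 : (fun h => Kfun A (g0 / g h - 1)) 0 = 0.
  by rewrite /= g0a g0E mulfV ?gt_eqF // subrr Kfun0.
have Hd : is_derive (0:R) (1:R) (fun h => Kfun A (g0 / g h - 1)) (- ('D_1 g 0 / G a)).
  have gn0 : g 0 != 0 by rewrite g0a gt_eqF.
  have HV := is_deriveV gn0 (derivableP dg).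
  have Hin := is_deriveB (is_deriveZ g0 HV) (is_derive_cst (1:R) (0:R) (1:R)).
  have HK : is_derive ((g0 \*: (fun y => (g y)^-1) - cst 1) 0) (1:R) (Kfun A) 1.
    have -> : (g0 \*: (fun y => (g y)^-1) - cst 1) 0 = 0.
      by change (g0 * (g 0)^-1 - 1 = 0); rewrite g0a g0E mulfV ?gt_eqF // subrr.
    exact: Kfun_derive.
  apply: (is_derive_eq (is_derive1_comp HK Hin)).
  rewrite /GRing.scale /= g0a g0E mul1r subr0.
  by field; exact: lt0r_neq0.
have Hc : {for 0, continuous (fun h => g h `^ (1 + al) *: Ut (h *: v + a))}.
  apply: cvgZ.
    apply: (@continuous_comp _ _ _ g ((@powR R) ^~ (1 + al))) => //.
    apply: differentiable_continuous; apply/derivable1_diffP.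
    by case: (is_derive1_powR (1 + al) (_ : 0 < g 0)) => //; rewrite g0a.
  apply: (@continuous_comp _ _ _ (fun h : R => h *: v + a) Ut); first exact: line_cont.
  by rewrite scale0r add0r.
rewrite (derive_Zvanish _ _ _ _ Ha0 Hd Hc).
by rewrite g0a scale0r add0r scalerA.
Qed.

End OneVar.

Section Fub.
Context {R : realType}.
Local Notation mu := (@lebesgue_measure R).

Lemma fine_int (g : R -> R) : Lintegrable g ->
  (\int[mu]_x (g x)%:E)%E = (RintL g)%:E.
Proof. by move=> ig; rewrite /RintL /Rintegral fineK //; exact: integrable_fin_num. Qed.

Lemma RintL0 : RintL (fun _ : R => 0) = 0.
Proof. by rewrite /RintL /Rintegral integral0. Qed.

Lemma RintL_scale (c : R) (g : R -> R) : (c != 0 -> Lintegrable g) ->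
  RintL (fun x => c * g x) = c * RintL g.
Proof.
have [->|c0] := eqVneq c 0.
  by move=> _; rewrite mul0r; under eq_fun do rewrite mul0r; exact: RintL0.
move=> /(_ isT) ig; rewrite /RintL RintegralZl //.
Qed.

Lemma fubini_ab (a : R -> R) (Wf : R -> R -> R) (b : R -> R) :
  L2integrable (fun q : R * R => a q.1 * Wf q.1 q.2 * b q.2) ->
  measurable_fun setT (fun x => (a x * RintL (fun z => Wf x z * b z))%:E) ->
  (forall z, Lintegrable (fun x => a x * Wf x z)) ->
  RintL (fun x => a x * RintL (fun z => Wf x z * b z))
  = RintL (fun z => RintL (fun x => a x * Wf x z) * b z).
Proof.
move=> iF mh iaW.
have Fub := Fubini iF.
have L : (\int[mu]_x (a x * RintL (fun z => Wf x z * b z))%:E)%E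
       = (\int[mu]_x \int[mu]_y (a (x, y).1 * Wf (x, y).1 (x, y).2 * b (x, y).2)%:E)%E.
  apply: ae_eq_integral => //.
    exact: (measurable_fubini_F iF).
  apply: filterS (ae_integrable1 iF) => x /= ix _.
  rewrite (fine_int (fun y => a x * Wf x y * b y) ix).
  congr EFin.
  under [RHS]eq_Rintegral do rewrite -mulrA.
  rewrite [RHS]RintL_scale //.
  move=> ax0.
  have := integrableZl measurableT (a x)^-1 ix.
  apply: eq_integrable => //= y _.
  by rewrite -EFinM mulrA mulrA mulVf // mul1r.
have Rt : (\int[mu]_y (RintL (fun x => a x * Wf x y) * b y)%:E)%E
       = (\int[mu]_y \int[mu]_x (a (x, y).1 * Wf (x, y).1 (x, y).2 * b (x, y).2)%:E)%E.
  apply: eq_integral => y _ /=.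
  rewrite (fine_int (fun x => a x * Wf x y * b y)).
    by congr EFin; rewrite /RintL RintegralZr //; exact: iaW.
  have := integrableZl measurableT (b y) (iaW y).
  apply: eq_integrable => //= x _.
  by rewrite -EFinM mulrC.
by rewrite /RintL /Rintegral L Rt Fub.
Qed.

End Fub.

Section Aux.
Context {R : realType}.
Local Notation mu := (@lebesgue_measure R).

Lemma Lint_ext (g1 g2 : R -> R) : (forall x, g1 x = g2 x) -> Lintegrable g1 -> Lintegrable g2.
Proof. by move=> e; have -> : g1 = g2 by apply/funext. Qed.

Lemma LintZ (c : R) (g : R -> R) : Lintegrable g -> Lintegrable (fun x => c * g x).
Proof.
move=> ig; have := integrableZl measurableT c ig.
by apply: eq_integrable => //= x _; rewrite EFinM.
Qed.

Lemma LintD (g1 g2 : R -> R) : Lintegrable g1 -> Lintegrable g2 ->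
  Lintegrable (fun x => g1 x + g2 x).
Proof.
move=> i1 i2; have := integrableD measurableT i1 i2.
by apply: eq_integrable => //= x _; rewrite EFinD.
Qed.

Lemma RintLD (g1 g2 : R -> R) : Lintegrable g1 -> Lintegrable g2 ->
  RintL (fun x => g1 x + g2 x) = RintL g1 + RintL g2.
Proof. by move=> i1 i2; rewrite /RintL RintegralD. Qed.

Lemma RintLB (g1 g2 : R -> R) : Lintegrable g1 -> Lintegrable g2 ->
  RintL (fun x => g1 x - g2 x) = RintL g1 - RintL g2.
Proof. by move=> i1 i2; rewrite /RintL RintegralB. Qed.

Lemma RintL_ext (g1 g2 : R -> R) : (forall x, g1 x = g2 x) -> RintL g1 = RintL g2.
Proof. by move=> e; have -> : g1 = g2 by apply/funext. Qed.

Lemma RintL_sum (I : Type) (s : seq I) (c : I -> R) (g : I -> R -> R) :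
  (forall k, Lintegrable (g k)) ->
  Lintegrable (fun z => \sum_(k <- s) c k * g k z) /\
  RintL (fun z => \sum_(k <- s) c k * g k z) = \sum_(k <- s) c k * RintL (g k).
Proof.
move=> ig; elim: s => [|k s [IHi IHe]].
  rewrite big_nil; under eq_fun do rewrite big_nil.
  split; last exact: RintL0.
  exact: integrable0.
rewrite big_cons; under eq_fun do rewrite big_cons.
have ik : Lintegrable (fun z => c k * g k z) by exact: LintZ.
split; first exact: LintD.
by rewrite RintLD // IHe RintL_scale.
Qed.

Lemma pdiff_loc_cst (p : nat) (Theta : set 'cV[R]_p) (F : 'cV[R]_p -> R) (c : R)
  (j : 'I_p) (a : 'cV[R]_p) :
  open Theta -> Theta a -> (forall th, Theta th -> F th = c) -> pdiff F j a = 0.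
Proof.
move=> oT Ta FE; rewrite /pdiff (@near_eq_derive _ _ _ F (cst c)).
  exact: derive_cst.
have : nbhs a Theta by apply: open_nbhs_nbhs.
by apply: filterS => x /FE.
Qed.

End Aux.

Theorem corollary3 (R : realType) (p : nat) (Theta : set 'cV[R]_p)
  (f : 'cV[R]_p -> R -> R) (W : R -> R -> R -> R) (alpha lambda h : R)
  (M : 'cV[R]_p -> 'M[R]_p) (L : 'cV[R]_p)
  (theta : 'cV[R]_p) (y : R) (t : R -> 'cV[R]_p) :
  (* parameter space, true parameter *)
  open Theta -> Theta theta ->
  (* {f_th} is a family of (positive) Lebesgue densities *)
  (forall th, Theta th -> forall x, 0 < f th x) ->
  (forall th, Theta th -> Lintegrable (f th) /\ RintL (f th) = 1) ->
  (* tuning parameters; lambda is arbitrary *)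
  0 <= alpha -> 0 < h ->
  (* W(.,z,h) is a probability density for every z *)
  (forall x z, 0 <= W x z h) ->
  (forall z, Lintegrable (fun x => W x z h) /\ RintL (fun x => W x z h) = 1) ->
  (forall th, Theta th -> forall x, 0 < fstar W h f th x) ->
  (* kernel condition: u^{alpha*}_th(z) = M(th) f_th(z)^alpha u_th(z) + L *)
  (forall th, Theta th -> forall z,
      ualphastar alpha W h f th z
      = M th *m (f th z `^ alpha *: score f th z) + L) ->
  (forall th, Theta th -> M th \in unitmx) ->
  (forall j : 'I_p,
      RintL (fun z => score f theta z j 0 * f theta z `^ (1 + alpha)) = 0
      \/ (forall th1 th2, Theta th1 -> Theta th2 -> col j (M th1) = col j (M th2))) ->
  (* t(eps) = T*_{(alpha,lambda)}((1-eps) F_theta + eps /\_y), eps in [0,1]: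
     a root in Theta of the estimating equation, with T*(F_theta) = theta *)
  (forall e, 0 <= e <= 1 ->
      Theta (t e) /\ Psi alpha lambda W h f (gstar_contam W h f theta y e) (t e) = 0) ->
  t 0 = theta ->
  (* the influence function exists *)
  cvg ((fun e : R => e^-1 *: (t e - t 0)) @ 0^'+) ->
  (* ---- regularity conditions (standard, implicit in the paper) ---- *)
  (* nonsingular information-type matrix *)
  mint (fun z => f theta z `^ (1 + alpha) *: (score f theta z *m (score f theta z)^T))
    \in unitmx ->
  (* pointwise smoothness in theta *)
  (forall z, differentiable (fun th => f th z) theta) ->
  (forall x, differentiable (fun th => fstar W h f th x) theta) ->
  (forall x, {for theta, continuous (fun th => utilde W h f th x)}) ->
  (* differentiation under the integral sign *)
  (forall x (j : 'I_p), pdiff (fun th => fstar W h f th x) j theta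
      = RintL (fun z => W x z h * pdiff (fun th => f th z) j theta)) ->
  (forall j : 'I_p, pdiff (fun th => RintL (f th)) j theta
      = RintL (fun z => pdiff (fun th => f th z) j theta)) ->
  differentiable
    (fun q : R * 'cV[R]_p => Psi alpha lambda W h f (gstar_contam W h f theta y q.1) q.2)
    (0, theta) ->
  'D_(1, 0) (fun q : R * 'cV[R]_p =>
       Psi alpha lambda W h f (gstar_contam W h f theta y q.1) q.2) (0, theta)
    = vint (fun x => 'D_1 (fun e : R =>
        Psi_integrand alpha lambda W h f (gstar_contam W h f theta y e) theta x) 0) ->
  (forall j : 'I_p,
    'D_(0, ej R j) (fun q : R * 'cV[R]_p =>
       Psi alpha lambda W h f (gstar_contam W h f theta y q.1) q.2) (0, theta)
    = vint (fun x => 'D_(ej R j) (fun th =>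
        Psi_integrand alpha lambda W h f (gstar_contam W h f theta y 0) th x) theta)) ->
  (* integrability conditions *)
  (forall i j : 'I_p, Lintegrable (fun z =>
      f theta z `^ (1 + alpha) * score f theta z i 0 * score f theta z j 0)) ->
  (forall i : 'I_p, Lintegrable (fun z => f theta z `^ (1 + alpha) * score f theta z i 0)) ->
  (forall j : 'I_p, Lintegrable (fun z => pdiff (fun th => f th z) j theta)) ->
  (forall i j : 'I_p, Lintegrable (fun x =>
      fstar W h f theta x `^ (1 + alpha) * utilde W h f theta x i 0
        * utilde W h f theta x j 0)) ->
  (forall i : 'I_p, Lintegrable (fun x =>
      fstar W h f theta x `^ (1 + alpha) * utilde W h f theta x i 0)) ->
  (forall (i : 'I_p) z, Lintegrable (fun x =>
      fstar W h f theta x `^ alpha * W x z h * utilde W h f theta x i 0)) ->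
  (forall i j : 'I_p, L2integrable (fun q : R * R =>
      utilde W h f theta q.1 i 0 * fstar W h f theta q.1 `^ alpha * W q.1 q.2 h
        * pdiff (fun th => f th q.2) j theta)) ->
  (forall i : 'I_p, L2integrable (fun q : R * R =>
      utilde W h f theta q.1 i 0 * fstar W h f theta q.1 `^ alpha * W q.1 q.2 h
        * f theta q.2)) ->
  (* conclusion: IF(y; F_theta, T-star) equals the S-divergence influence function *)
  IF_path t
  = invmx (mint (fun z =>
        f theta z `^ (1 + alpha) *: (score f theta z *m (score f theta z)^T)))
    *m (f theta y `^ alpha *: score f theta y
        - vint (fun z => f theta z `^ (1 + alpha) *: score f theta z)).
Proof.
move=> HTo HTh Hfpos Hfint Hal Hh HW0 HWint Hfspos Hker HMu Hcol Hroot Ht0 Hcvg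
  HJu Hdf Hdfs Hcu Hdfsint Hdfint HdPhi HD1 HDj Hi1 Hi2 Hi3 Hi4 Hi5 Hi6 Hi7 Hi8.
have Hut : forall x (j : 'I_p), utilde W h f theta x j 0
    = pdiff (fun th => fstar W h f th x) j theta / fstar W h f theta x.
  by move=> x j; rewrite /utilde /grad mxE; apply: pdiff_ln => //; exact: Hfspos.
have Hu : forall z (j : 'I_p), score f theta z j 0
    = pdiff (fun th => f th z) j theta / f theta z.
  by move=> z j; rewrite /score /grad mxE; apply: pdiff_ln => //; exact: Hfpos.
have Hpdf : forall z (j : 'I_p), pdiff (fun th => f th z) j theta = f theta z * score f theta z j 0.
  by move=> z j; rewrite Hu mulrC divfK // gt_eqF // Hfpos.
have Hpdfs : forall x (j : 'I_p), pdiff (fun th => fstar W h f th x) j theta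
    = fstar W h f theta x * utilde W h f theta x j 0.
  by move=> x j; rewrite Hut mulrC divfK // gt_eqF // Hfspos.
have Hb0 : forall j : 'I_p, RintL (fun z => pdiff (fun th => f th z) j theta) = 0.
  move=> j; rewrite -Hdfint; apply: (pdiff_loc_cst _ _ _ 1 _ _ HTo HTh).
  by move=> th Tth; exact: (Hfint th Tth).2.
have pw : forall x : R, 0 < x -> x `^ (1 + alpha) = x * x `^ alpha.
  by move=> x x0; rewrite powRD ?powRr1 ?ltW // gt_eqF ?implybT // ltr_pwDl.
set Phi := fun q : R * 'cV[R]_p => Psi alpha lambda W h f (gstar_contam W h f theta y q.1) q.2.
have H1 : forall e, 0 < e <= 1 -> Phi (e, t e) = 0.
  move=> e /andP[e0 e1]; apply: (Hroot e _).2; by rewrite (ltW e0) e1.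
have H2 : Phi (0, theta) = 0.
  rewrite /Phi /= -{2}Ht0; apply: (Hroot 0 _).2; by rewrite lexx ler01.
have Hift := @ift_core R _ _ Phi t theta HdPhi H1 H2 Ht0 Hcvg.
rewrite /IF_path.
set IF := lim _ in Hift *.
have dec : ((1:R), IF) = (1, 0) + \sum_(j < p) IF j 0 *: ((0:R), ej R j).
  have fst_sum : forall F : 'I_p -> R * 'cV[R]_p,
      (\sum_(j < p) F j).1 = \sum_(j < p) (F j).1.
    by move=> F; apply: (big_morph fst) => //.
  have snd_sum : forall F : 'I_p -> R * 'cV[R]_p,
      (\sum_(j < p) F j).2 = \sum_(j < p) (F j).2.
    by move=> F; apply: (big_morph snd) => //.
  set S := \sum_(j < p) _.
  have -> : S = (S.1, S.2) by case: S.
  rewrite /S fst_sum snd_sum.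
  have e1 : \sum_(j < p) (IF j 0 *: ((0:R), ej R j)).1 = 0.
    by apply: big1 => j _; exact: mulr0.
  have e2 : \sum_(j < p) (IF j 0 *: ((0:R), ej R j)).2 = IF.
    transitivity (\sum_(j < p) IF j 0 *: ej R j); first by [].
    rewrite [RHS]matrix_sum_delta; apply: eq_bigr => j _.
    by rewrite big_ord1.
  rewrite e1 e2.
  by change (((1:R), IF) = (1 + 0, 0 + IF)); rewrite addr0 add0r.
have Hvec : 'D_((1:R), (0:'cV[R]_p)) Phi (0, theta)
    + \sum_(j < p) IF j 0 *: 'D_((0:R), ej R j) Phi (0, theta) = 0.
  rewrite deriveE //; under eq_bigr do rewrite deriveE //.
  have -> : \sum_(j < p) IF j 0 *: 'd Phi (0, theta) ((0:R), ej R j)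
      = 'd Phi (0, theta) (\sum_(j < p) IF j 0 *: ((0:R), ej R j)).
    by rewrite linear_sum; apply: eq_bigr => j _; rewrite linearZ.
  by rewrite -linearD -dec.
have HD10 : 'D_((1:R), (0:'cV[R]_p)) Phi (0, theta)
   = vint (fun x => ((W x y h / fstar W h f theta x - 1)
        * fstar W h f theta x `^ (1 + alpha)) *: utilde W h f theta x).
  rewrite HD1; congr vint; apply/funext => x; rewrite /Psi_integrand /gstar_contam.
  by rewrite (dPsi_eps _ _ _ _ _ _ (Hfspos theta HTh x)).
have HDj' : forall j : 'I_p, 'D_((0:R), ej R j) Phi (0, theta)
   = vint (fun x => ((- (pdiff (fun th => fstar W h f th x) j theta / fstar W h f theta x))
        * fstar W h f theta x `^ (1 + alpha)) *: utilde W h f theta x).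
  move=> j; rewrite HDj; congr vint; apply/funext => x; rewrite /Psi_integrand.
  apply: (@dPsi_theta R p _ (fun th => fstar W h f th x) (fun th => utilde W h f th x)).
  - exact: Hdfs.
  - exact: Hfspos.
  - by rewrite /gstar_contam subr0 mul1r mul0r addr0.
  - exact: Hcu.
pose ua := ualphastar alpha W h f theta y.
pose Jst := \matrix_(i < p, j < p) RintL (fun x => fstar W h f theta x `^ (1 + alpha)
    * utilde W h f theta x i 0 * utilde W h f theta x j 0).
pose xist := \col_(i < p) RintL (fun x => fstar W h f theta x `^ (1 + alpha)
    * utilde W h f theta x i 0).
have E10 : forall i, ('D_((1:R), (0:'cV[R]_p)) Phi (0, theta)) i 0 = ua i 0 - xist i 0.
  move=> i; rewrite HD10 /ua /ualphastar /vint /xist !mxE.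
  rewrite -RintLB.
  - apply: RintL_ext => x; rewrite !mxE pw ?Hfspos //.
    by field; apply: lt0r_neq0; exact: Hfspos.
  - by apply: (Lint_ext _ _ _ (Hi6 i y)) => x; rewrite /GRing.scale /= !mxE.
  - exact: Hi5.
have Ej : forall i j, ('D_((0:R), ej R j) Phi (0, theta)) i 0 = - Jst i j.
  move=> i j; rewrite HDj' /vint /Jst !mxE.
  rewrite -mulN1r -RintL_scale; last by move=> _; exact: Hi4.
  by apply: RintL_ext => x; rewrite mxE -Hut; ring.
have Hcomp : forall i, ua i 0 - xist i 0 = (Jst *m IF) i 0.
  move=> i; have HH := congr1 (fun m : 'cV[R]_p => m i 0) Hvec.
  rewrite /= !mxE summxE E10 in HH.
  rewrite (eq_bigr (fun j => IF j 0 * - Jst i j)) in HH; last by move=> j _; rewrite mxE Ej.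
  move/eqP: HH; rewrite addr_eq0 => /eqP ->.
  rewrite mxE -sumrN; apply: eq_bigr => j _.
  by rewrite mulrN opprK mulrC.
pose JS := mint (fun z => f theta z `^ (1 + alpha) *: (score f theta z *m (score f theta z)^T)).
pose xi := vint (fun z => f theta z `^ (1 + alpha) *: score f theta z).
have Hua : forall (i : 'I_p) z,
    RintL (fun x => utilde W h f theta x i 0 * fstar W h f theta x `^ alpha * W x z h)
    = \sum_(k < p) M theta i k * (f theta z `^ alpha * score f theta z k 0) + L i 0.
  move=> i z.
  have -> : RintL (fun x => utilde W h f theta x i 0 * fstar W h f theta x `^ alpha * W x z h)
      = (ualphastar alpha W h f theta z) i 0.
    rewrite /ualphastar /vint mxE; apply: RintL_ext => x.
    by rewrite /GRing.scale /= !mxE; ring.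
  rewrite Hker // !mxE; congr (_ + _); apply: eq_bigr => k _.
  by rewrite /GRing.scale /= !mxE.
have HJst : forall i j, Jst i j = (M theta *m JS) i j.
  move=> i j.
  have ptJ : forall x, fstar W h f theta x `^ (1 + alpha) * utilde W h f theta x i 0
        * utilde W h f theta x j 0
      = (utilde W h f theta x i 0 * fstar W h f theta x `^ alpha)
        * RintL (fun z => W x z h * pdiff (fun th => f th z) j theta).
    by move=> x; rewrite -Hdfsint Hpdfs pw ?Hfspos //; ring.
  rewrite /Jst !mxE (RintL_ext _ _ ptJ).
  rewrite (@fubini_ab R (fun x => utilde W h f theta x i 0 * fstar W h f theta x `^ alpha)
     (fun x z => W x z h) (fun z => pdiff (fun th => f th z) j theta) (Hi7 i j)); last 2 first.
  - apply: (measurable_int lebesgue_measure).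
    by apply: (Lint_ext _ _ ptJ); exact: Hi4.
  - by move=> z; apply: (Lint_ext _ _ _ (Hi6 i z)) => x; ring.
  transitivity (RintL (fun z => \sum_(k < p) M theta i k * (f theta z `^ (1 + alpha)
       * score f theta z k 0 * score f theta z j 0)
       + L i 0 * pdiff (fun th => f th z) j theta)).
    apply: RintL_ext => z; rewrite Hua mulrDl; congr (_ + _).
    rewrite big_distrl /=; apply: eq_bigr => k _.
    by rewrite Hpdf pw ?Hfpos //; ring.
  have Hs := RintL_sum _ (index_enum 'I_p) (fun k => M theta i k)
     (fun k z => f theta z `^ (1 + alpha) * score f theta z k 0 * score f theta z j 0)
     (fun k => Hi1 k j).
  rewrite RintLD; first last.
  - by apply: LintZ; exact: Hi3.
  - exact: Hs.1.
  rewrite Hs.2 RintL_scale ?Hb0 ?mulr0 ?addr0; last by move=> _; exact: Hi3.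
  apply: eq_bigr => k _; congr (_ * _).
  rewrite /JS /mint mxE; apply: RintL_ext => z.
  by rewrite /GRing.scale /= !mxE big_ord1 !mxE mulrA.
have Hxist : forall i, xist i 0 = (M theta *m xi + L) i 0.
  move=> i.
  have ptx : forall x, fstar W h f theta x `^ (1 + alpha) * utilde W h f theta x i 0
      = (utilde W h f theta x i 0 * fstar W h f theta x `^ alpha)
        * RintL (fun z => W x z h * f theta z).
    move=> x; have -> : RintL (fun z => W x z h * f theta z) = fstar W h f theta x by [].
    by rewrite pw ?Hfspos //; ring.
  rewrite /xist !mxE (RintL_ext _ _ ptx).
  rewrite (@fubini_ab R (fun x => utilde W h f theta x i 0 * fstar W h f theta x `^ alpha)
     (fun x z => W x z h) (f theta) (Hi8 i)); last 2 first.
  - apply: (measurable_int lebesgue_measure).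
    by apply: (Lint_ext _ _ ptx); exact: Hi5.
  - by move=> z; apply: (Lint_ext _ _ _ (Hi6 i z)) => x; ring.
  transitivity (RintL (fun z => \sum_(k < p) M theta i k * (f theta z `^ (1 + alpha)
       * score f theta z k 0) + L i 0 * f theta z)).
    apply: RintL_ext => z; rewrite Hua mulrDl; congr (_ + _).
    rewrite big_distrl /=; apply: eq_bigr => k _.
    by rewrite pw ?Hfpos //; ring.
  have Hs := RintL_sum _ (index_enum 'I_p) (fun k => M theta i k)
     (fun k z => f theta z `^ (1 + alpha) * score f theta z k 0) (fun k => Hi2 k).
  rewrite RintLD; first last.
  - by apply: LintZ; exact: (Hfint theta HTh).1.
  - exact: Hs.1.
  rewrite Hs.2 RintL_scale; last by move=> _; exact: (Hfint theta HTh).1.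
  rewrite (Hfint theta HTh).2 mulr1; congr (_ + _); apply: eq_bigr => k _.
  congr (_ * _); rewrite /xi /vint mxE; apply: RintL_ext => z.
  by rewrite /GRing.scale /= !mxE.
have key : ua - xist = Jst *m IF.
  by apply/matrixP => i k; rewrite ord1 [LHS]mxE [(- xist) i 0]mxE Hcomp.
have Hx : xist = M theta *m xi + L by apply/matrixP => i k; rewrite ord1; exact: Hxist.
have HJ : Jst = M theta *m JS by apply/matrixP => i j; exact: HJst.
rewrite /ua (Hker theta HTh y) Hx HJ in key.
have key2 : M theta *m (f theta y `^ alpha *: score f theta y - xi) = M theta *m (JS *m IF).
  by rewrite mulmxA -key mulmxBr opprD addrACA subrr addr0.
have Heq := congr1 (mulmx (invmx (M theta))) key2.
rewrite !mulKmx ?HMu // in Heq.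
by rewrite -/JS -/xi Heq mulKmx.
Qed.
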